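(* Let $\mathcal A$ be a causal linear time-invariant algorithm with state-space realization $(A,B,C,D)$ whose oracles are (sub)gradients, and let $i\ne j$ be oracle indices with $D_{ii}\ne0$ and $D_{jj}\ne0$. Then $\mathcal C_i\mathcal C_j\mathcal A=\mathcal C_j\mathcal C_i\mathcal A=\mathcal C_{\{i,j\}}\mathcal A$.
   Context: A linear time-invariant algorithm generates $x^{k+1}=Ax^k+Bu^k$, $y^k=Cx^k+Du^k$, $u^k=\phi(y^k)$, with oracles $\partial f_1,\dots,\partial f_n$ (subgradients of convex functions) called in the order $1,\dots,n$ each iteration; causality means each oracle call depends only on previously computed quantities, so $D$ (indexed blockwise by oracles in call order) is lower triangular. For a set $\kappa$ of oracle indices, $\mathcal C_\kappa\mathcal A$ is the algorithm obtained by rewriting $\mathcal A$ to call $\partial f_i^\star=(\partial f_i)^{-1}$ ($f^\star$ the Fenchel conjugate) instead of $\partial f_i$ for $i\in\kappa$; $\mathcal C_i=\mathcal C_{\{i\}}$. Algorithms are compared via their transfer functions $C(zI-A)^{-1}B+D$. *)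

(* Defs.v *)
From HB Require Import structures.
From mathcomp Require Import all_boot all_order all_algebra.
From mathcomp Require Import all_reals.
Set Implicit Arguments. Unset Strict Implicit. Unset Printing Implicit Defensive.
Import Order.TTheory GRing.Theory Num.Theory.
Local Open Scope ring_scope.

(* A linear time-invariant algorithm with n (scalar-coefficient) oracles,
   called in the order 0, ..., n-1, and state dimension s:
     x^{k+1} = A x^k + B u^k,   y^k = C x^k + D u^k,   u^k_i in \partial f_i (y^k_i). *)
Record lti (R : Type) (n s : nat) := LTI {
  ltiA : 'M[R]_s;
  ltiB : 'M[R]_(s, n);
  ltiC : 'M[R]_(n, s);
  ltiD : 'M[R]_n }.

(* Causality: D is lower triangular (oracle i only uses u_j for j < i, and
   possibly u_i itself through an implicit/proximal step). *)
Definition causal (R : ringType) n s (S : lti R n s) : Prop :=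
  forall a b : 'I_n, (a < b)%N -> ltiD S a b = 0.

Definition selmx (R : ringType) n (kappa : {set 'I_n}) : 'M[R]_n :=
  \matrix_(a, b) ((a == b) && (a \in kappa))%:R.

(* C_kappa : rewrite the algorithm so that it calls \partial f_i^* = (\partial f_i)^{-1}
   instead of \partial f_i for i in kappa.  For i in kappa the roles of y_i and u_i
   are swapped: the new oracle input is y'_i = u_i and its output is u'_i = y_i
   (u_i in \partial f_i(y_i) <-> y_i in \partial f_i^*(u_i)).  Solving
   y = C x + D u for u_kappa (which requires D_{kappa kappa} invertible) gives the
   realization below, with P = selection of kappa, Q = I - P,
   F = (P D P + Q)^{-1} P, G = Q + F - F D Q:
     u  = G u' - F C x,
     A' = A - B F C,  B' = B G,  C' = (Q - (Q D + P) F) C,  D' = (Q D + P) G. *)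
Definition conj_alg (R : fieldType) n s (kappa : {set 'I_n}) (S : lti R n s)
  : lti R n s :=
  let P := selmx R kappa in
  let Q := 1%:M - P in
  let D := ltiD S in
  let F := invmx (P *m D *m P + Q) *m P in
  let G := Q + F - F *m D *m Q in
  LTI (ltiA S - ltiB S *m F *m ltiC S)
      (ltiB S *m G)
      ((Q - (Q *m D + P) *m F) *m ltiC S)
      ((Q *m D + P) *m G).

Definition ratfun (R : fieldType) := {fraction {poly R}}.
Definition rconst (R : fieldType) (a : R) : ratfun R := FracField.tofrac (a%:P).
Definition zvar (R : fieldType) : ratfun R := FracField.tofrac ('X : {poly R}).

Definition transfer (R : fieldType) n s (S : lti R n s) : 'M[ratfun R]_n :=
  map_mx (@rconst R) (ltiC S)
    *m invmx ((zvar R)%:M - map_mx (@rconst R) (ltiA S))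
    *m map_mx (@rconst R) (ltiB S)
  + map_mx (@rconst R) (ltiD S).

(* Main.v *)
Require Import Defs.
From HB Require Import structures.
From mathcomp Require Import all_boot all_order all_algebra.
From mathcomp Require Import all_reals.
From mathcomp Require Import ring.
Import Order.TTheory GRing.Theory Num.Theory.
Local Open Scope ring_scope.

Lemma selE (R : ringType) n (k : {set 'I_n}) a b :
  selmx R k a b = ((a == b) && (a \in k))%:R.
Proof. by rewrite mxE. Qed.

Lemma selmulE (R : ringType) n m (k : {set 'I_n}) (M : 'M[R]_(n, m)) a b :
  (selmx R k *m M) a b = (a \in k)%:R * M a b.
Proof.
rewrite mxE (bigD1 a) //= big1 ?addr0; first by rewrite selE eqxx.
by move=> l /negbTE hl; rewrite selE eq_sym hl mul0r.
Qed.

Lemma mulselE (R : ringType) n m (k : {set 'I_n}) (M : 'M[R]_(m, n)) a b :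
  (M *m selmx R k) a b = M a b * (b \in k)%:R.
Proof.
rewrite mxE (bigD1 b) //= big1 ?addr0; first by rewrite selE eqxx.
by move=> l /negbTE hl; rewrite selE hl mulr0.
Qed.

Lemma selsel (R : ringType) n (k : {set 'I_n}) :
  selmx R k *m selmx R k = selmx R k.
Proof.
apply/matrixP=> a b; rewrite selmulE selE.
by case: (a \in k); case: (a == b); rewrite ?mul1r ?mul0r ?andbF.
Qed.

Lemma selselD (R : ringType) n (i j : 'I_n) : i != j ->
  selmx R [set i] *m selmx R [set j] = 0.
Proof.
move=> hij; apply/matrixP=> a b; rewrite selmulE selE !in_set1 mxE.
case: (eqVneq a i) => [->|h]; last by rewrite mul0r.
by rewrite (negbTE hij) andbF mulr0.
Qed.

Lemma sel2 (R : ringType) n (i j : 'I_n) : i != j ->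
  selmx R [set i; j] = selmx R [set i] + selmx R [set j].
Proof.
move=> hij; apply/matrixP=> a b; rewrite !mxE !in_set2 !in_set1.
case: (a == b); rewrite ?addr0 //=.
case: (eqVneq a i) => [->|h] /=; first by rewrite (negbTE hij) addr0.
by rewrite add0r.
Qed.

Lemma conj_canon (R : fieldType) n s (k : {set 'I_n}) (S : lti R n s) :
  let P := selmx R k in let Q := 1%:M - P in let D := ltiD S in
  let N := Q + P *m D in let O := Q *m D + P in
  N \in unitmx ->
  conj_alg k S = LTI (ltiA S - ltiB S *m invmx N *m P *m ltiC S) (ltiB S *m invmx N)
     (Q *m ltiC S - O *m invmx N *m P *m ltiC S) (O *m invmx N).
Proof.
move=> P Q D N O hN.
have PP : P *m P = P by exact: selsel.
have QP : Q *m P = 0 by rewrite mulmxBl mul1mx PP subrr.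
have PQ : P *m Q = 0 by rewrite mulmxBr mulmx1 PP subrr.
have QQ : Q *m Q = Q by rewrite mulmxBr mulmx1 QP subr0.
have PQ1 : P + Q = 1%:M by rewrite /Q addrC subrK.
have PPl m (X : 'M_(m, n)) : X *m P *m P = X *m P by rewrite -mulmxA PP.
have QPl m (X : 'M_(m, n)) : X *m Q *m P = 0 by rewrite -mulmxA QP mulmx0.
have PQl m (X : 'M_(m, n)) : X *m P *m Q = 0 by rewrite -mulmxA PQ mulmx0.
have QQl m (X : 'M_(m, n)) : X *m Q *m Q = X *m Q by rewrite -mulmxA QQ.
have splitr m (X : 'M_(m, n)) : X = X *m P + X *m Q by rewrite -mulmxDr PQ1 mulmx1.
set W := P *m D *m P + Q.
have hNW : N = (1%:M + P *m D *m Q) *m W.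
  rewrite mulmxDl mul1mx /W mulmxDr !mulmxA QPl mul0mx mul0mx add0r QQl.
  by rewrite /N {1}(splitr _ (P *m D)) addrA (addrC Q).

have hW : W \in unitmx.
  by move: hN; rewrite hNW unitmx_mul; case/andP.
have WQ : W *m Q = Q by rewrite /W mulmxDl PQl add0r QQ.
have iWQ : invmx W *m Q = Q by rewrite -{1}WQ mulKmx.
have iWPDP : invmx W *m (P *m D *m P) = P.
  have -> : P *m D *m P = W - Q by rewrite /W addrK.
  by rewrite mulmxBr mulVmx // iWQ /Q opprB addrC subrK.
set F := invmx W *m P.
set G := Q + F - F *m D *m Q.
have FQ : F *m Q = 0 by rewrite /F PQl.
have FP : F *m P = F by rewrite /F PPl.
have FDP : F *m D *m P = P by rewrite /F -[RHS]iWPDP !mulmxA.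
have GN : G *m N = 1%:M.
  rewrite /G /N mulmxBl (mulmxDl Q F) !(mulmxDr _ Q (P *m D)) !mulmxA QQ QP mul0mx FQ FP QQl QPl mul0mx.
  by rewrite addr0 add0r addr0 {1}(splitr _ (F *m D)) FDP addrA addrK addrC PQ1.
have iN : invmx N = G by rewrite -[G]mulmx1 -(mulmxV hN) mulmxA GN mul1mx.
have GP : G *m P = F by rewrite /G mulmxBl mulmxDl QP FP QPl add0r subr0.
rewrite iN /conj_alg /= -/P -/Q -/D -/W -/F -/G.
by rewrite -/O -(mulmxA (ltiB S) G) -(mulmxA O G) GP mulmxBl.
Qed.

Lemma conj_props (R : fieldType) n s (k : {set 'I_n}) (S : lti R n s) :
  let P := selmx R k in let Q := 1%:M - P in let D := ltiD S in
  let N := Q + P *m D in let O := Q *m D + P in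
  N \in unitmx ->
  [/\ ltiB (conj_alg k S) *m N = ltiB S, ltiD (conj_alg k S) *m N = O,
      ltiA (conj_alg k S) + ltiB (conj_alg k S) *m P *m ltiC S = ltiA S &
      ltiC (conj_alg k S) + ltiD (conj_alg k S) *m P *m ltiC S = Q *m ltiC S].
Proof.
move=> P Q D N O hN; rewrite conj_canon //=.
by rewrite !mulmxKV // !subrK.
Qed.

Lemma conj_char (R : fieldType) n s (k : {set 'I_n}) (S : lti R n s) A1 B1 C1 D1 :
  let P := selmx R k in let Q := 1%:M - P in let D := ltiD S in
  let N := Q + P *m D in let O := Q *m D + P in
  N \in unitmx ->
  B1 *m N = ltiB S -> D1 *m N = O -> A1 + B1 *m P *m ltiC S = ltiA S ->
  C1 + D1 *m P *m ltiC S = Q *m ltiC S ->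
  conj_alg k S = LTI A1 B1 C1 D1.
Proof.
move=> P Q D N O hN e1 e2 e3 e4; rewrite conj_canon //.
have eB : ltiB S *m invmx N = B1 by rewrite -e1 mulmxK.
have eD : O *m invmx N = D1 by rewrite -e2 mulmxK.
by rewrite eB eD -e3 -e4 !addrK.
Qed.

Lemma compose (R : fieldType) n s (S : lti R n s) (i j : 'I_n) :
  i != j ->
  (1%:M - selmx R [set j]) + selmx R [set j] *m ltiD S \in unitmx ->
  (1%:M - selmx R [set i]) + selmx R [set i] *m ltiD (conj_alg [set j] S) \in unitmx ->
  conj_alg [set i] (conj_alg [set j] S) = conj_alg [set i; j] S.
Proof.
move=> hij hj hi.
have [b1 d1 a1 c1] := @conj_props _ _ _ _ _ hj.
have [b2 d2 a2 c2] := @conj_props _ _ _ _ _ hi.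
move: b1 d1 a1 c1 b2 d2 a2 c2 hi hj.
move: (conj_alg [set i] (conj_alg [set j] S)) => S2.
move: (conj_alg [set j] S) => S1.
case: S2 => A2 B2 C2 D2 /=.
case: S1 => A1 B1 C1 D1 /=.
case: S => A B C D /=.
set Pi := selmx R [set i]; set Pj := selmx R [set j].
move=> b1 d1 a1 c1 b2 d2 a2 c2 hi hj.
have PiPi : Pi *m Pi = Pi by exact: selsel.
have PjPj : Pj *m Pj = Pj by exact: selsel.
have PiPj : Pi *m Pj = 0 by exact: selselD.
have PjPi : Pj *m Pi = 0 by apply: selselD; rewrite eq_sym.
have ePij : selmx R [set i; j] = Pi + Pj by exact: sel2.
have QiPj : (1%:M - Pi) *m Pj = Pj by rewrite mulmxBl mul1mx PiPj subr0.
have PiQj : Pi *m (1%:M - Pj) = Pi by rewrite mulmxBr mulmx1 PiPj subr0.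
have QiQj : (1%:M - Pi) *m (1%:M - Pj) = 1%:M - (Pi + Pj).
  by rewrite mulmxBl mul1mx PiQj opprD addrA addrAC.
have hN : (1%:M - (Pi + Pj)) + (Pi + Pj) *m D
    = (1%:M - Pi + Pi *m D1) *m (1%:M - Pj + Pj *m D).
  rewrite mulmxDl -(mulmxA Pi D1) d1 mulmxDr (mulmxA (1%:M - Pi) Pj D) QiQj QiPj.
  rewrite mulmxDr (mulmxA Pi (1%:M - Pj) D) PiQj PiPj addr0.
  by rewrite mulmxDl (addrC (Pi *m D)) addrA.
have hNij : (1%:M - (Pi + Pj)) + (Pi + Pj) *m D \in unitmx.
  by rewrite hN unitmx_mul hi hj.
have kX m (X : 'M_(m, n)) :
    X *m (1%:M - Pi + Pi *m D1) *m Pj *m C = X *m Pj *m C + X *m Pi *m D1 *m Pj *m C.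
  by rewrite mulmxDr !mulmxDl -(mulmxA X (1%:M - Pi) Pj) QiPj !mulmxA.
have eC1 : C1 = (1%:M - Pj) *m C - D1 *m Pj *m C by rewrite -c1 addrK.
have kY m (X : 'M_(m, n)) :
    X *m Pi *m C1 = X *m Pi *m C - X *m Pi *m D1 *m Pj *m C.
  by rewrite eC1 mulmxBr (mulmxA (X *m Pi) (1%:M - Pj) C) -(mulmxA X Pi (1%:M - Pj)) PiQj !mulmxA.
symmetry; apply: (@conj_char _ _ _ _ _ A2 B2 C2 D2); rewrite /= ePij //.
- by rewrite hN mulmxA b2 b1.
- rewrite hN mulmxA d2 mulmxDl -(mulmxA (1%:M - Pi) D1) d1.
  rewrite mulmxDr (mulmxA (1%:M - Pi) (1%:M - Pj) D) QiQj QiPj.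
  rewrite mulmxDr PiQj (mulmxA Pi Pj D) PiPj mul0mx addr0.
  by rewrite -addrA (addrC Pj).
- have kA1 := kX _ B2; rewrite b2 in kA1.
  have eA2 : A2 = A1 - B2 *m Pi *m C1 by rewrite -a2 addrK.
  have eA1 : A1 = A - B1 *m Pj *m C by rewrite -a1 addrK.
  rewrite eA2 eA1 kA1 kY mulmxDr mulmxDl.
  move: (B2 *m Pj *m C) (B2 *m Pi *m D1 *m Pj *m C) (B2 *m Pi *m C) => X Y Z.
  by apply/matrixP=> a b; rewrite !mxE; ring.
- have kD := kX _ D2; rewrite d2 (mulmxDl ((1%:M - Pi) *m D1) Pi Pj) PiPj addr0 in kD.
  have eC2 : C2 = (1%:M - Pi) *m C1 - D2 *m Pi *m C1 by rewrite -c2 addrK.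
  have eD2 : D2 *m Pj *m C = (1%:M - Pi) *m D1 *m Pj *m C - D2 *m Pi *m D1 *m Pj *m C.
    by rewrite kD addrK.
  rewrite eC2 kY (mulmxDr D2 Pi Pj) (mulmxDl (D2 *m Pi) (D2 *m Pj) C) eD2.
  rewrite {1}eC1 mulmxBr (mulmxA (1%:M - Pi) (1%:M - Pj) C) QiQj !mulmxA.
  move: ((1%:M - Pi) *m D1 *m Pj *m C) (D2 *m Pi *m D1 *m Pj *m C) (D2 *m Pi *m C) => X Y Z.
  by apply/matrixP=> a b; rewrite !mxE; ring.
Qed.

Lemma selmid (R : ringType) n m p (k : 'I_n) (X : 'M[R]_(m, n)) (Y : 'M[R]_(n, p)) a b :
  (X *m selmx R [set k] *m Y) a b = X a k * Y k b.
Proof.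
rewrite mxE (bigD1 k) //= big1 ?addr0; first by rewrite mulselE in_set1 eqxx mulr1.
by move=> l hl; rewrite mulselE in_set1 (negbTE hl) mulr0 mul0r.
Qed.

Lemma unit1 (R : fieldType) n (D : 'M[R]_n) (k : 'I_n) : D k k != 0 ->
  (1%:M - selmx R [set k]) + selmx R [set k] *m D \in unitmx.
Proof.
move=> hk.
set P := selmx R [set k]; set Q := 1%:M - P.
have PP : P *m P = P by exact: selsel.
have QP : Q *m P = 0 by rewrite mulmxBl mul1mx PP subrr.
have PQ : P *m Q = 0 by rewrite mulmxBr mulmx1 PP subrr.
have QQ : Q *m Q = Q by rewrite mulmxBr mulmx1 QP subr0.
have PDP : P *m D *m P = D k k *: P.
  apply/matrixP=> a b; rewrite mulselE selmulE !mxE !in_set1.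
  case: (eqVneq a k) => [->|ha]; case: (eqVneq b k) => [->|hb];
  by rewrite ?eqxx ?andbT ?andbF ?(eq_sym k b) ?(negbTE hb) /= ?mulr1n ?mulr0n ?mulr1 ?mul1r ?mulr0 ?mul0r.
have hX : (P - P *m D *m Q) *m (Q + P *m D) = D k k *: P.
  rewrite mulmxBl (mulmxDr P Q) PQ add0r (mulmxA P P D) PP (mulmxDr (P *m D *m Q) Q).
  rewrite -(mulmxA (P *m D) Q Q) QQ -(mulmxA _ Q (P *m D)) (mulmxA Q P D) QP mul0mx mulmx0 addr0.
  by rewrite -{1}[P *m D]mulmx1 -mulmxBr /Q opprB addrC subrK PDP.
have e : (Q + (D k k)^-1 *: (P - P *m D *m Q)) *m (Q + P *m D) = 1%:M.
  rewrite mulmxDl -scalemxAl hX mulmxDr QQ mulmxA QP mul0mx addr0.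
  by rewrite scalerA mulVf // scale1r /Q subrK.
by case: (mulmx1_unit e).
Qed.

Lemma entD (R : ringType) m n (A B : 'M[R]_(m, n)) a b : (A + B) a b = A a b + B a b.
Proof. by rewrite mxE. Qed.
Lemma entN (R : ringType) m n (A : 'M[R]_(m, n)) a b : (- A) a b = - A a b.
Proof. by rewrite !mxE. Qed.

Lemma D1ii (R : fieldType) n s (S : lti R n s) (i j : 'I_n) :
  causal S -> i != j -> ltiD S j j != 0 ->
  ltiD (conj_alg [set j] S) i i = ltiD S i i.
Proof.
move=> hc hij hj.
have hu := @unit1 _ _ _ _ hj.
have [_ d1 _ _] := @conj_props _ _ _ _ _ hu.
move: d1; move: (ltiD (conj_alg [set j] S)) => D1.
have hcD : forall a b : 'I_n, (a < b)%N -> ltiD S a b = 0 := hc.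
move: hcD hj; move: (ltiD S) => D hcD hj d1.
have eb b : D1 i b - D1 i b * (b == j)%:R + D1 i j * D j b = D i b.
  have := congr1 (fun M : 'M[R]_n => M i b) d1; rewrite /=.
  rewrite mulmxDr mulmxBr mulmx1 mulmxA !entD !entN selmid mulselE in_set1.
  rewrite mulmxBl mul1mx entD entN selmulE mxE !in_set1 (negbTE hij) /=.
  by rewrite mul0r subr0 andbF addr0.
have e1 := eb j; rewrite eqxx mulr1 subrr add0r in e1.
have e2 := eb i; rewrite (negbTE hij) mulr0 subr0 in e2.
case: (ltngtP i j) => h.
- have := hcD _ _ h; rewrite -e1 => /eqP; rewrite mulf_eq0 (negbTE hj) orbF => /eqP h0.
  by rewrite -e2 h0 mul0r addr0.
- by rewrite -e2 (hcD _ _ h) mulr0 addr0.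
- by rewrite (val_inj h) eqxx in hij.
Qed.

Theorem proposition8p4 (R : realType) (n s : nat) (S : lti R n s) (i j : 'I_n) :
  causal S -> i != j -> ltiD S i i != 0 -> ltiD S j j != 0 ->
  transfer (conj_alg [set i] (conj_alg [set j] S))
    = transfer (conj_alg [set i; j] S) /\
  transfer (conj_alg [set j] (conj_alg [set i] S))
    = transfer (conj_alg [set i; j] S).
Proof.
move=> hc hij hi hj.
have key : forall a b : 'I_n, a != b -> ltiD S a a != 0 -> ltiD S b b != 0 ->
    conj_alg [set a] (conj_alg [set b] S) = conj_alg [set a; b] S.
  move=> a b hab ha hb; apply: compose => //; first exact: unit1.
  by apply: unit1; rewrite D1ii.
have hji : j != i by rewrite eq_sym.
have eset : [set j; i] = [set i; j] :> {set 'I_n} by apply: setUC.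
by rewrite (key i j hij hi hj) (key j i hji hj hi) eset.
Qed.
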